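(* Let $p>2$ and let $r=p/(p-1)$. Let $x=\sum_{i=1}^m\lambda_ie_i\in\mathbb{R}^m$ with $\|x\|_p=1$ and $\lambda_i\neq0$ for all $i\in\{1,\dots,m\}$, and let $d\in\mathbb{R}^m$ be given by $d_i=\operatorname{sign}(\lambda_i)|\lambda_i|^{p-1}$ (the unique vector with $\|d\|_r=1$ in the normal cone of the unit $\ell_p$ ball at $x$). Then there exists $\alpha>0$ such that the unit $\ell_p$ ball $\ell_p(1)=\{y:\|y\|_p\leq1\}$ is $(\alpha,2)$-locally uniformly convex at $x$ with respect to $d$, i.e. for every $\epsilon\in[0,2]$, $\inf\{\langle d,x-y\rangle: y\in\ell_p(1),\ \|x-y\|_p\geq\epsilon\}\geq\alpha\epsilon^2$; equivalently, $\langle d,x-y\rangle\geq\alpha\|x-y\|_p^2$ for all $y\in\ell_p(1)$.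
   Context: $e_1,\dots,e_m$ is the canonical basis of $\mathbb{R}^m$ and $\|\cdot\|_p$ the $\ell_p$ norm; its dual norm is $\|\cdot\|_r$ with $1/p+1/r=1$. *)

(* Defs.v *)
From HB Require Import structures.
From mathcomp Require Import all_boot all_order all_algebra.
From mathcomp Require Import all_classical all_reals.
From mathcomp Require Import exp.
Set Implicit Arguments. Unset Strict Implicit. Unset Printing Implicit Defensive.
Import Order.TTheory GRing.Theory Num.Theory.
Local Open Scope ring_scope.

(* Vectors of R^m are functions 'I_m -> R (coordinates w.r.t. e_1..e_m). *)

Definition lpnorm (R : realType) (m : nat) (p : R) (x : 'I_m -> R) : R :=
  (\sum_(i < m) `|x i| `^ p) `^ p^-1.

Definition dotp (R : realType) (m : nat) (u v : 'I_m -> R) : R :=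
  \sum_(i < m) u i * v i.

Definition lp_ball1 (R : realType) (m : nat) (p : R) (y : 'I_m -> R) : Prop :=
  lpnorm p y <= 1.

(* K is (alpha,q)-locally uniformly convex at x w.r.t. d, for the norm nrm:
   for every eps in [0,2],
   inf { <d, x - y> : y in K, nrm (x - y) >= eps } >= alpha * eps^q.
   (An infimum is >= c iff every element of the set is >= c; inf of the
   empty set is +oo.) *)
Definition loc_unif_convex (R : realType) (m : nat)
    (nrm : ('I_m -> R) -> R) (K : ('I_m -> R) -> Prop)
    (x d : 'I_m -> R) (alpha q : R) : Prop :=
  forall eps : R, 0 <= eps <= 2 ->
    forall y : 'I_m -> R, K y -> eps <= nrm (fun i => x i - y i) ->
      alpha * eps `^ q <= dotp d (fun i => x i - y i).

(* Main.v *)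
Require Import Defs.
From HB Require Import structures.
From mathcomp Require Import all_boot all_order all_algebra.
From mathcomp Require Import all_classical all_reals.
From mathcomp Require Import exp.
From mathcomp Require Import all_analysis.
From mathcomp Require Import lra ring.
Import Order.TTheory GRing.Theory Num.Theory.
Import numFieldNormedType.Exports.
Local Open Scope ring_scope.

Lemma tangent_powR (R : realType) (q u v : R) : 1 <= q -> 0 < v -> 0 <= u ->
  v `^ q + q * v `^ (q - 1) * (u - v) <= u `^ q.
Proof.
move=> q1 v0 u0.
have q0 : 0 < q by apply: lt_le_trans q1.
have vq : v * v `^ (q - 1) = v `^ q by rewrite mulr_powRB1 // ltW.
have q10 : 0 <= q - 1 by rewrite subr_ge0.
have der : forall a b : R, 0 < a -> forall x : R, x \in `]a, b[%R ->
    is_derive x 1 (fun y : R => y `^ q) (q * x `^ (q - 1)).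
  move=> a b a0 x; rewrite in_itv /= => /andP[ax _].
  apply: is_derive1_powR; exact: lt_trans ax.
have cont : forall a b : R, 0 < a -> forall x, x \in `[a, b]%R -> derivable (fun y : R => y `^ q) x 1.
  move=> a b a0 x.
  rewrite in_itv /= => /andP[ax _].
  apply: derivable_powR; rewrite in_itv /= andbT; exact: lt_le_trans ax.
case: (ltgtP u v) => [uv|vu|->]; last by rewrite subrr mulr0 addr0.
- move: u0; rewrite le_eqVlt => /predU1P[<-|u0].
    rewrite powR0 ?gt_eqF // sub0r mulrN -mulrA (mulrC _ v) vq.
    have : 0 <= (q - 1) * v `^ q by rewrite mulr_ge0 ?powR_ge0.
    lra.
  have [c] := MVT uv (der u v u0) (derivable_within_continuous (cont u v u0)).
  rewrite in_itv /= => /andP[uc cv] E.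
  have : c `^ (q - 1) <= v `^ (q - 1).
    by apply: ge0_ler_powR => //; rewrite ?nnegrE ltW // (lt_trans u0).
  move=> H.
  have -> : u `^ q = v `^ q - q * c `^ (q - 1) * (v - u) by rewrite -E opprB addrC subrK.
  have : q * c `^ (q - 1) * (v - u) <= q * v `^ (q - 1) * (v - u).
    by rewrite ler_pM2r ?subr_gt0 // ler_pM2l.
  lra.
- have [c] := MVT vu (der v u v0) (derivable_within_continuous (cont v u v0)).
  rewrite in_itv /= => /andP[vc cu] E.
  have : v `^ (q - 1) <= c `^ (q - 1).
    by apply: ge0_ler_powR => //; rewrite ?nnegrE ltW // (lt_trans v0).
  move=> H.
  have : q * v `^ (q - 1) * (u - v) <= q * c `^ (q - 1) * (u - v).
    by rewrite ler_pM2r ?subr_gt0 // ler_pM2l.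
  lra.
Qed.
Lemma breg (R : realType) (p a t : R) : 2 <= p -> a != 0 ->
  `|a| `^ p + p * (Num.sg a * `|a| `^ (p - 1)) * (t - a)
   + (p / 2) * `|a| `^ (p - 2) * (t - a) ^+ 2 <= `|t| `^ p.
Proof.
move=> p2 a0.
have q1 : 1 <= p / 2 by rewrite ler_pdivlMr // mul1r.
have E x : `|x| `^ p = (x ^+ 2) `^ (p / 2).
  by rewrite -real_normK ?num_real // -powR_mulrn // -powRrM mulrC divfK.
have v0 : 0 < a ^+ 2 by rewrite exprn_even_gt0 // a0 orbT.
have F : (a ^+ 2) `^ (p / 2 - 1) = `|a| `^ (p - 2).
  by rewrite -real_normK ?num_real // -powR_mulrn // -powRrM; congr (_ `^ _); field.
have G : Num.sg a * `|a| `^ (p - 1) = a * `|a| `^ (p - 2).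
  rewrite -(mulr_powRB1 (normr_ge0 a)); last by lra.
  by rewrite mulrA -(numEsg a); congr (_ * _ `^ _); ring.
have := @tangent_powR _ _ _ _ q1 v0 (sqr_ge0 t).
rewrite -!E F G.
suff -> : `|a| `^ p + p * (a * `|a| `^ (p - 2)) * (t - a) +
  p / 2 * `|a| `^ (p - 2) * (t - a) ^+ 2 =
  `|a| `^ p + p / 2 * `|a| `^ (p - 2) * (t ^+ 2 - a ^+ 2) by [].
by field.
Qed.
Lemma ex_minR (R : realType) (m : nat) (i0 : 'I_m) (F : 'I_m -> R) :
  exists j, forall i, F j <= F i.
Proof.
case: (@arg_minP _ R 'I_m i0 xpredT F isT) => j _ H; exists j => i; exact: H.
Qed.

Lemma ex_maxR (R : realType) (m : nat) (i0 : 'I_m) (F : 'I_m -> R) :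
  exists j, forall i, F i <= F j.
Proof.
case: (@arg_maxP _ R 'I_m i0 xpredT F isT) => j _ H; exists j => i; exact: H.
Qed.

Theorem mainTheorem2 (R : realType) (m : nat) (p : R) (lambda : 'I_m -> R) :
  2 < p ->
  lpnorm p lambda = 1 ->
  (forall i, lambda i != 0) ->
  let r := p / (p - 1) in
  let d := fun i => Num.sg (lambda i) * `|lambda i| `^ (p - 1) in
  exists alpha : R, 0 < alpha /\
    loc_unif_convex (lpnorm p) (lp_ball1 p) lambda d alpha 2.
Proof.
move=> p2 hn hnz r d.
have p0 : 0 < p by lra.
have pi0 : p^-1 != 0 by rewrite invr_eq0 gt_eqF.
have back : forall S : R, 0 <= S -> S = (S `^ p^-1) `^ p.
  by move=> S S0; rewrite -powRrM mulVf ?gt_eqF // powRr1.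
have Sx : \sum_(i < m) `|lambda i| `^ p = 1.
  have S0 : 0 <= \sum_(i < m) `|lambda i| `^ p by apply: sumr_ge0 => i _; exact: powR_ge0.
  by rewrite (back _ S0) -/(lpnorm p lambda) hn powR1.
have m0 : (0 < m)%N.
  case: m lambda hn hnz d Sx => [|m] lambda hn hnz d Sx //.
  by move: Sx; rewrite big_ord0 => /eqP; rewrite eq_sym oner_eq0.
pose i0 := Ordinal m0.
have [jm Hjm] := @ex_minR _ _ i0 (fun i => `|lambda i| `^ (p - 2)).
set mu := `|lambda jm| `^ (p - 2) in Hjm.
have mu0 : 0 < mu by rewrite powR_gt0 // normr_gt0.
set K := (m%:R `^ p^-1) ^+ 2.
have K0 : 0 < K by rewrite exprn_gt0 // powR_gt0 // ltr0n.
exists (mu / (2 * K)); split; first by rewrite divr_gt0 // mulr_gt0.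
move=> eps /andP[e0 e2] y Ky heps.
set h := fun i => lambda i - y i.
have [jM HjM] := @ex_maxR _ _ i0 (fun i => `|h i|).
set M := `|h jM| in HjM.
set W := \sum_(i < m) `|lambda i| `^ (p - 2) * h i ^+ 2.
have Sy : \sum_(i < m) `|y i| `^ p <= 1.
  have S0 : 0 <= \sum_(i < m) `|y i| `^ p by apply: sumr_ge0 => i _; exact: powR_ge0.
  rewrite (back _ S0).
  rewrite [X in _ <= X](_ : 1 = 1 `^ p); last by rewrite powR1.
  apply: ge0_ler_powR; rewrite ?nnegrE ?powR_ge0 //; lra.
have stepA : W / 2 <= dotp d h.
  have T : forall i, `|lambda i| `^ p - p * (d i * h i)
        + p / 2 * (`|lambda i| `^ (p - 2) * h i ^+ 2) <= `|y i| `^ p.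
    move=> i; have := @breg _ _ _ (y i) (ltW p2) (hnz i).
    rewrite /h /d.
    rewrite -[y i - lambda i]opprB sqrrN mulrN /=.
    by rewrite !mulrA.
  have H : \sum_(i < m) (`|lambda i| `^ p - p * (d i * h i)
        + p / 2 * (`|lambda i| `^ (p - 2) * h i ^+ 2)) <= \sum_(i < m) `|y i| `^ p.
    by apply: ler_sum => i _; exact: T.
  move: H; rewrite !big_split /= sumrN -!mulr_sumr Sx -/W.
  move=> H.
  have : 0 <= p * (dotp d h - W / 2) by rewrite /dotp; lra.
  by rewrite pmulr_rge0 // subr_ge0.
have stepB : mu * M ^+ 2 <= W.
  rewrite /W (bigD1 jM) //= -[X in X <= _]addr0 lerD //.
    by rewrite /M real_normK ?num_real // ler_wpM2r ?sqr_ge0.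
  by apply: sumr_ge0 => i _; rewrite mulr_ge0 ?powR_ge0 ?sqr_ge0.
have M0 : 0 <= M by exact: normr_ge0.
have stepC : eps <= m%:R `^ p^-1 * M.
  apply: (le_trans heps); rewrite /lpnorm -/h.
  have E : (M `^ p) `^ p^-1 = M by rewrite -powRrM mulfV ?gt_eqF // powRr1.
  rewrite -E -powRM ?ler0n ?powR_ge0 //.
  apply: ge0_ler_powR.
  - by rewrite invr_ge0 ltW.
  - by rewrite nnegrE; apply: sumr_ge0 => i _; exact: powR_ge0.
  - by rewrite nnegrE mulr_ge0 ?ler0n ?powR_ge0.
  rewrite mulr_natl (_ : (M `^ p) *+ m = \sum_(i < m) M `^ p); last by rewrite sumr_const card_ord.
  apply: ler_sum => i _; apply: ge0_ler_powR.
  - exact: ltW.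
  - by rewrite nnegrE.
  - by rewrite nnegrE.
  - exact: HjM.
have stepD : eps `^ 2 <= K * M ^+ 2.
  rewrite (powR_mulrn 2 e0) /K -exprMn.
  have g0 : 0 <= m%:R `^ p^-1 * M by rewrite mulr_ge0 ?powR_ge0.
  rewrite !expr2; by apply: ler_pM.
have : mu / (2 * K) * eps `^ 2 <= mu / (2 * K) * (K * M ^+ 2).
  by apply: ler_wpM2l => //; rewrite ltW // divr_gt0 // mulr_gt0.
have -> : mu / (2 * K) * (K * M ^+ 2) = mu * M ^+ 2 / 2.
  by field; rewrite gt_eqF.
lra.
Qed.
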